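(* Suppose $y$ is the peak blue entry of a $321$-containing avoider $p$. Then (i) $p\,\backslash\,\{y\}$ is again an avoider, (ii) the blue entries of $p$ other than $y$ become the blue entries of $p\,\backslash\,\{y\}$, and (iii) $y$ is in the peak-insertion set of $p\,\backslash\,\{y\}$.
   Context: Permutations are standard permutations written in one-line form. A permutation on $[n]$ is indecomposable if there is no $k$ with $1\le k<n$ such that its first $k$ entries are exactly $\{1,\dots,k\}$ (the empty permutation is not indecomposable). An ''avoider'' means an indecomposable permutation avoiding both patterns $3241$ and $4321$. A blue (key-2) entry of an avoider is an entry that serves as the ''2'' in a $321$ pattern or in a $4312$ pattern. For a $321$-containing avoider, let $a$ be the last (rightmost) entry serving as the ''1'' of a $321$ pattern; the peak blue entry is the larger of $a$ and its immediate predecessor. Deleting an entry $y$ from a permutation $p$ on $[n]$, written $p\,\backslash\,\{y\}$, means erasing $y$ and subtracting $1$ from each entry $>y$. LRMax means left-to-right maximum. To a $321$-containing permutation $p$ on $[n]$ associate the triple $(a,b,c)$: $a$ is the last ''1'' of a $321$ in $p$, $b$ is the rightmost entry to the left of $a$ that exceeds $a$, and $c$ is the first non-LRMax entry after $a$ ($c=\infty$ if there is none). Its peak-insertion set is $[a+1,b+1]\cup[c+1,n]$, where $[c+1,n]=\emptyset$ if $c=\infty$. For a $321$-avoiding permutation on $[n]$, set $c=1$ and define its peak-insertion set to be $[2,n]$. *)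

(* Defs.v *)
(* Permutations are sequences of nats in one-line
   form with values 1..n; positions are 0-based indices into the sequence. *)
From mathcomp Require Import all_boot.
Set Implicit Arguments. Unset Strict Implicit. Unset Printing Implicit Defensive.

Definition is_perm (p : seq nat) : Prop := perm_eq p (iota 1 (size p)).

Definition indecomposable (p : seq nat) : Prop :=
  0 < size p /\ forall k, 1 <= k < size p -> ~ perm_eq (take k p) (iota 1 k).

Definition order_iso (s q : seq nat) : Prop :=
  size s = size q /\
  forall i j, i < size q -> j < size q ->
    (nth 0 s i < nth 0 s j) = (nth 0 q i < nth 0 q j).

Definition occurrence (p q : seq nat) (idx : seq nat) : Prop :=
  sorted ltn idx /\ all (fun i => i < size p) idx /\
  order_iso (map (nth 0 p) idx) q.

Definition contains (p q : seq nat) : Prop := exists idx, occurrence p q idx.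

Definition serves_at (p q : seq nat) (r : nat) (i : nat) : Prop :=
  exists idx, occurrence p q idx /\ nth 0 idx (index r q) = i.

Definition serves_as (p q : seq nat) (r : nat) (y : nat) : Prop :=
  exists i, serves_at p q r i /\ nth 0 p i = y.

Definition avoider (p : seq nat) : Prop :=
  [/\ is_perm p, indecomposable p,
      ~ contains p [:: 3; 2; 4; 1] & ~ contains p [:: 4; 3; 2; 1]].

Definition blue (p : seq nat) (y : nat) : Prop :=
  serves_as p [:: 3; 2; 1] 2 y \/ serves_as p [:: 4; 3; 1; 2] 2 y.

Definition last_one_pos (p : seq nat) (i : nat) : Prop :=
  serves_at p [:: 3; 2; 1] 1 i /\
  forall j, i < j -> ~ serves_at p [:: 3; 2; 1] 1 j.

Definition peak_blue (p : seq nat) (y : nat) : Prop :=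
  exists i, last_one_pos p i /\ y = maxn (nth 0 p i) (nth 0 p i.-1).

Definition relabel (y x : nat) : nat := if y < x then x.-1 else x.
Definition delete (p : seq nat) (y : nat) : seq nat :=
  [seq relabel y x | x <- p & x != y].

Definition rightmost_greater_pos (p : seq nat) (i j : nat) : Prop :=
  j < i /\ nth 0 p i < nth 0 p j /\
  forall k, j < k < i -> ~ (nth 0 p i < nth 0 p k).

Definition is_LRMax (p : seq nat) (k : nat) : Prop :=
  forall j, j < k -> nth 0 p j < nth 0 p k.

Definition first_nonLRMax_after (p : seq nat) (i k : nat) : Prop :=
  i < k < size p /\ ~ is_LRMax p k /\
  forall m, i < m < k -> is_LRMax p m.

Definition in_peak_insertion_set (q : seq nat) (y : nat) : Prop :=
  (contains q [:: 3; 2; 1] /\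
   exists i j, last_one_pos q i /\ rightmost_greater_pos q i j /\
     ((nth 0 q i).+1 <= y <= (nth 0 q j).+1 \/
      exists k, first_nonLRMax_after q i k /\
                (nth 0 q k).+1 <= y <= size q))
  \/ (~ contains q [:: 3; 2; 1] /\ 2 <= y <= size q).

(* Main.v *)
Require Import Defs.
From mathcomp Require Import all_boot zify.
Set Implicit Arguments. Unset Strict Implicit. Unset Printing Implicit Defensive.

Lemma occ_size p q idx : occurrence p q idx -> size idx = size q.
Proof. by case=> _ [_ [h _]]; rewrite size_map in h. Qed.

Lemma occ3P p q i j k : occurrence p q [:: i; j; k] <->
  [/\ i < j, j < k, k < size p & order_iso [:: nth 0 p i; nth 0 p j; nth 0 p k] q].
Proof.
rewrite /occurrence /=; split.
  case=> /and3P[h1 h2 _] [/and4P[_ _ h3 _] h4]; split=> //.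
case=> h1 h2 h3 h4; rewrite h1 h2 /=; split=> //; split=> //.
have := h3; have : j < size p by lia. have : i < size p by lia.
by move=> -> -> ->.
Qed.

Lemma occ4P p q i j k l : occurrence p q [:: i; j; k; l] <->
  [/\ i < j, j < k, k < l /\ l < size p &
      order_iso [:: nth 0 p i; nth 0 p j; nth 0 p k; nth 0 p l] q].
Proof.
rewrite /occurrence /=; split.
  case=> /and4P[h1 h2 h5 _] [/and5P[_ _ _ h3 _] h4]; split=> //.
case=> h1 h2 [h5 h3] h4; rewrite h1 h2 h5 /=; split=> //; split=> //.
have := h3; have : k < size p by lia. have : j < size p by lia. have : i < size p by lia.
by move=> -> -> -> ->.
Qed.

Lemma seq3 (s : seq nat) : size s = 3 -> exists i j k, s = [:: i; j; k].
Proof. by case: s => [|i [|j [|k [|]]]] //= _; exists i, j, k. Qed.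
Lemma seq4 (s : seq nat) : size s = 4 -> exists i j k l, s = [:: i; j; k; l].
Proof. by case: s => [|i [|j [|k [|l [|]]]]] //= _; exists i, j, k, l. Qed.

Ltac iso_split := split; [done|]; move=> [|[|[|[|?]]]] [|[|[|[|?]]]] //= _ _; lia.

Lemma iso321 a b c : order_iso [:: a; b; c] [:: 3; 2; 1] <-> c < b /\ b < a.
Proof.
split; last by case=> ? ?; iso_split.
case=> _ h; split; [move: (h 2 1 erefl erefl) | move: (h 1 0 erefl erefl)] => /= -> //.
Qed.

Lemma iso4312 a b c d : order_iso [:: a; b; c; d] [:: 4; 3; 1; 2] <-> [/\ c < d, d < b & b < a].
Proof.
split; last by case=> ? ? ?; iso_split.
case=> _ h; split; [move: (h 2 3 erefl erefl) | move: (h 3 1 erefl erefl) | move: (h 1 0 erefl erefl)] => /= -> //.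
Qed.

Lemma iso3241 a b c d : order_iso [:: a; b; c; d] [:: 3; 2; 4; 1] <-> [/\ d < b, b < a & a < c].
Proof.
split; last by case=> ? ? ?; iso_split.
case=> _ h; split; [move: (h 3 1 erefl erefl) | move: (h 1 0 erefl erefl) | move: (h 0 2 erefl erefl)] => /= -> //.
Qed.

Lemma iso4321 a b c d : order_iso [:: a; b; c; d] [:: 4; 3; 2; 1] <-> [/\ d < c, c < b & b < a].
Proof.
split; last by case=> ? ? ?; iso_split.
case=> _ h; split; [move: (h 3 2 erefl erefl) | move: (h 2 1 erefl erefl) | move: (h 1 0 erefl erefl)] => /= -> //.
Qed.

Section Pat.
Variable p : seq nat.
Local Notation P := (nth 0 p).

Lemma c321P : contains p [:: 3; 2; 1] <->
  exists i j k, [/\ i < j, j < k, k < size p, P k < P j & P j < P i].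
Proof.
split.
  case=> idx h; have [i [j [k e]]] := seq3 (occ_size h); subst idx.
  case/occ3P: h => h1 h2 h3 /iso321 [h4 h5]; by exists i, j, k.
case=> i [j [k [h1 h2 h3 h4 h5]]]; exists [:: i; j; k]; apply/occ3P; split=> //.
exact/iso321.
Qed.

Lemma s321_1P t : serves_at p [:: 3; 2; 1] 1 t <->
  exists i j, [/\ i < j, j < t, t < size p, P t < P j & P j < P i].
Proof.
split.
  case=> idx [h e]; have [i [j [k e']]] := seq3 (occ_size h); subst idx.
  case/occ3P: h => h1 h2 h3 /iso321 [h4 h5]; rewrite /= in e; subst k; by exists i, j.
case=> i [j [h1 h2 h3 h4 h5]]; exists [:: i; j; t]; split=> //; apply/occ3P; split=> //.
exact/iso321.
Qed.

Lemma s321_2P t : serves_at p [:: 3; 2; 1] 2 t <->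
  exists i k, [/\ i < t, t < k, k < size p, P k < P t & P t < P i].
Proof.
split.
  case=> idx [h e]; have [i [j [k e']]] := seq3 (occ_size h); subst idx.
  case/occ3P: h => h1 h2 h3 /iso321 [h4 h5]; rewrite /= in e; subst j; by exists i, k.
case=> i [k [h1 h2 h3 h4 h5]]; exists [:: i; t; k]; split=> //; apply/occ3P; split=> //.
exact/iso321.
Qed.

Lemma s4312_2P t : serves_at p [:: 4; 3; 1; 2] 2 t <->
  exists e f g, [/\ e < f, f < g, g < t /\ t < size p, P g < P t & P t < P f /\ P f < P e].
Proof.
split.
  case=> idx [h e]; have [i [j [k [l e']]]] := seq4 (occ_size h); subst idx.
  case/occ4P: h => h1 h2 [h3 h3'] /iso4312 [h4 h5 h6]; rewrite /= in e; subst l.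
  by exists i, j, k.
case=> i [j [k [h1 h2 [h3 h3'] h4 [h5 h6]]]]; exists [:: i; j; k; t]; split=> //.
apply/occ4P; split=> //; exact/iso4312.
Qed.

Lemma c3241P : contains p [:: 3; 2; 4; 1] <->
  exists i j k l, [/\ i < j, j < k, k < l /\ l < size p, P l < P j & P j < P i /\ P i < P k].
Proof.
split.
  case=> idx h; have [i [j [k [l e']]]] := seq4 (occ_size h); subst idx.
  case/occ4P: h => h1 h2 [h3 h3'] /iso3241 [h4 h5 h6]; by exists i, j, k, l.
case=> i [j [k [l [h1 h2 [h3 h3'] h4 [h5 h6]]]]]; exists [:: i; j; k; l].
apply/occ4P; split=> //; exact/iso3241.
Qed.

Lemma c4321P : contains p [:: 4; 3; 2; 1] <->
  exists i j k l, [/\ i < j, j < k, k < l /\ l < size p, P l < P k & P k < P j /\ P j < P i].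
Proof.
split.
  case=> idx h; have [i [j [k [l e']]]] := seq4 (occ_size h); subst idx.
  case/occ4P: h => h1 h2 [h3 h3'] /iso4321 [h4 h5 h6]; by exists i, j, k, l.
case=> i [j [k [l [h1 h2 [h3 h3'] h4 [h5 h6]]]]]; exists [:: i; j; k; l].
apply/occ4P; split=> //; exact/iso4321.
Qed.

End Pat.

Definition sh (t k : nat) := if k < t then k else k.+1.
Definition unsh (t k : nat) := if k < t then k else k.-1.

Lemma delete_eq (p : seq nat) t : uniq p -> t < size p ->
  delete p (nth 0 p t) = map (relabel (nth 0 p t)) (take t p ++ drop t.+1 p).
Proof.
move=> Hu Ht; rewrite /delete; congr map.
have E : p = take t p ++ nth 0 p t :: drop t.+1 p by rewrite -drop_nth // cat_take_drop.
set y := nth 0 p t in E *.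
have := Hu; rewrite [in uniq _]E cat_uniq /= => /and3P[_ H1 /andP[H2 _]].
rewrite [in filter _ _]E filter_cat /= eqxx /=.
have -> : [seq x <- take t p | x != y] = take t p.
  apply/all_filterP/allP=> x xin; apply/eqP=> ex; rewrite ex in xin.
  by rewrite /= xin in H1.
have -> // : [seq x <- drop t.+1 p | x != y] = drop t.+1 p.
apply/all_filterP/allP=> x xin; apply/eqP=> ex; rewrite ex in xin.
by rewrite xin in H2.
Qed.

Lemma size_delete (p : seq nat) t : uniq p -> t < size p -> size (delete p (nth 0 p t)) = (size p).-1.
Proof.
move=> Hu Ht; rewrite delete_eq // size_map size_cat size_take size_drop Ht -subn1; lia.
Qed.

Lemma nth_delete (p : seq nat) t k : uniq p -> t < size p -> k < (size p).-1 ->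
  nth 0 (delete p (nth 0 p t)) k = relabel (nth 0 p t) (nth 0 p (sh t k)).
Proof.
move=> Hu Ht Hk; rewrite delete_eq //.
rewrite (nth_map 0); last by rewrite size_cat size_take size_drop Ht; lia.
rewrite nth_cat size_take Ht /sh; case: ifP => hk; first by rewrite nth_take.
rewrite nth_drop; congr (relabel _ (nth _ _ _)); lia.
Qed.

Lemma relabel_lt y x x' : x != y -> x' != y -> (relabel y x < relabel y x') = (x < x').
Proof. rewrite /relabel => /eqP h1 /eqP h2; case: ifP; case: ifP; lia. Qed.

Lemma relabel_inj y x x' : x != y -> x' != y -> relabel y x = relabel y x' -> x = x'.
Proof. rewrite /relabel => /eqP h1 /eqP h2; case: ifP; case: ifP; lia. Qed.

Lemma sh_unsh t k : k != t -> sh t (unsh t k) = k.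
Proof. rewrite /sh /unsh => /eqP h; case: ifP; case: ifP; lia. Qed.

Section Perm.
Variable p : seq nat.
Hypothesis Hperm : is_perm p.
Local Notation P := (nth 0 p).
Local Notation n := (size p).

Lemma puniq : uniq p.
Proof. by rewrite (perm_uniq Hperm) iota_uniq. Qed.

Lemma pmem x : (x \in p) = (1 <= x <= n).
Proof. by rewrite (perm_mem Hperm) mem_iota; lia. Qed.

Lemma Prange k : k < n -> 1 <= P k <= n.
Proof. by move=> hk; rewrite -pmem mem_nth. Qed.

Lemma Pinj k l : k < n -> l < n -> P k = P l -> k = l.
Proof. by move=> hk hl e; apply/eqP; rewrite -(nth_uniq 0 hk hl puniq) e. Qed.

Lemma Ppos v : 1 <= v <= n -> exists k, k < n /\ P k = v.
Proof.
move=> hv; have vin : v \in p by rewrite pmem.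
by exists (index v p); rewrite index_mem nth_index.
Qed.

Lemma indecP : indecomposable p -> forall k, 1 <= k < n -> exists m, m < k /\ k < P m.
Proof.
case=> _ H k hk; case: (boolP (has (fun m => k < P m) (iota 0 k))).
  by case/hasP=> m; rewrite mem_iota => hm hm'; exists m; split=> //; lia.
move/hasPn=> hn; exfalso; apply: (H k hk).
have hs : {subset take k p <= iota 1 k}.
  move=> x /(nthP 0) [m]; rewrite size_take; have -> : k < n by lia.
  move=> hm <-; rewrite nth_take // mem_iota.
  have := hn m; rewrite mem_iota => /(_ ltac:(lia)); have := @Prange m.
  move=> h1; rewrite -leqNgt => h2; have /andP[h3 _] := h1 ltac:(lia).
  by rewrite h3 add1n ltnS.
have hsz : size (iota 1 k) <= size (take k p).
  by rewrite size_take size_iota; case: ifP => //; lia.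
have [_ e] := uniq_min_size (take_uniq k puniq) hs hsz.
by apply: uniq_perm; [exact: take_uniq puniq | exact: iota_uniq | exact: e].
Qed.

Lemma pigeon k (S : seq nat) : k <= n -> (forall m, m < k -> P m \in S) -> size S <= k ->
  forall v, v \in S -> exists m, m < k /\ P m = v.
Proof.
move=> hk hS hsz v vin.
have hs : {subset take k p <= S}.
  move=> x /(nthP 0) [m]; rewrite size_take => hm <-.
  have hmk : m < k by move: hm; case: ifP => h0; lia.
  by rewrite nth_take //; apply: hS.
have hsz' : size S <= size (take k p).
  by rewrite size_take; case: ifP => h0; lia.
have [_ e] := uniq_min_size (take_uniq k puniq) hs hsz'.
rewrite -e in vin; case/(nthP 0): vin => m; rewrite size_take => hm <-.
have hmk : m < k by move: hm; case: ifP => h0; lia.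
by exists m; rewrite nth_take.
Qed.

End Perm.

Section Del.
Variable p : seq nat.
Variable t : nat.
Hypothesis Hperm : is_perm p.
Hypothesis Ht : t < size p.
Local Notation P := (nth 0 p).
Local Notation n := (size p).
Local Notation y := (nth 0 p t).
Local Notation q := (delete p (nth 0 p t)).
Local Notation Q := (nth 0 (delete p (nth 0 p t))).

Lemma sizeq : size q = n - 1.
Proof. by rewrite (size_delete (puniq Hperm) Ht) subn1. Qed.

Lemma Qe k : k < n - 1 -> Q k = relabel y (P (sh t k)).
Proof. by move=> hk; rewrite nth_delete // ?(puniq Hperm) // -subn1. Qed.

Lemma sh_lt k : k < n - 1 -> sh t k < n.
Proof. rewrite /sh; case: ifP; lia. Qed.

Lemma sh_ne k : sh t k != t.
Proof. rewrite /sh; case: ifP => h; apply/eqP; lia. Qed.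

Lemma sh_mono k l : k < l -> sh t k < sh t l.
Proof. rewrite /sh; case: ifP; case: ifP; lia. Qed.

Lemma Pne x : x < n -> x != t -> P x != y.
Proof. move=> hx /eqP hne; apply/eqP=> e; exact: hne (Pinj Hperm hx Ht e). Qed.

Lemma Qlt k l : k < n - 1 -> l < n - 1 -> (Q k < Q l) = (P (sh t k) < P (sh t l)).
Proof.
move=> hk hl; rewrite !Qe // relabel_lt //; apply: Pne; rewrite ?sh_ne ?sh_lt //.
Qed.

Lemma unsh_lt x : x < n -> x != t -> unsh t x < n - 1.
Proof. rewrite /unsh => h /eqP h'; case: ifP; lia. Qed.

Lemma unsh_mono x x' : x < x' -> x != t -> x' != t -> unsh t x < unsh t x'.
Proof. rewrite /unsh => h /eqP h1 /eqP h2; case: ifP; case: ifP; lia. Qed.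

Lemma Qunsh x : x < n -> x != t -> Q (unsh t x) = relabel y (P x).
Proof. by move=> hx hxt; rewrite Qe ?unsh_lt // sh_unsh. Qed.

Lemma Qunsh_lt x x' : x < n -> x' < n -> x != t -> x' != t ->
  (Q (unsh t x) < Q (unsh t x')) = (P x < P x').
Proof. by move=> *; rewrite !Qunsh // relabel_lt //; apply: Pne. Qed.

Lemma up_c3241 : contains q [:: 3; 2; 4; 1] -> contains p [:: 3; 2; 4; 1].
Proof.
move=> /c3241P [i [j [k [l [h1 h2 [h3 h4] h5 [h6 h7]]]]]].
rewrite sizeq in h4.
rewrite !Qlt in h5 h6 h7; try lia.
apply/c3241P; exists (sh t i), (sh t j), (sh t k), (sh t l).
by split; rewrite ?sh_mono ?sh_lt //; split; rewrite ?sh_mono ?sh_lt //; lia.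
Qed.

Lemma up_c4321 : contains q [:: 4; 3; 2; 1] -> contains p [:: 4; 3; 2; 1].
Proof.
move=> /c4321P [i [j [k [l [h1 h2 [h3 h4] h5 [h6 h7]]]]]].
rewrite sizeq in h4.
rewrite !Qlt in h5 h6 h7; try lia.
apply/c4321P; exists (sh t i), (sh t j), (sh t k), (sh t l).
by split; rewrite ?sh_mono ?sh_lt //; split; rewrite ?sh_mono ?sh_lt //; lia.
Qed.

Lemma up_s321_1 s : serves_at q [:: 3; 2; 1] 1 s -> serves_at p [:: 3; 2; 1] 1 (sh t s).
Proof.
move=> /s321_1P [i [j [h1 h2 h3 h5 h6]]].
rewrite sizeq in h3.
rewrite !Qlt in h5 h6; try lia.
apply/s321_1P; exists (sh t i), (sh t j).
by split; rewrite ?sh_mono ?sh_lt //; lia.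
Qed.

Lemma Qsh_eq s x : s < n - 1 -> x != y -> Q s = relabel y x -> P (sh t s) = x.
Proof.
move=> hs hx; rewrite Qe // => e; apply: (relabel_inj _ hx e).
by apply: Pne; rewrite ?sh_lt ?sh_ne.
Qed.

Lemma up_blue x : x != y -> blue q (relabel y x) -> blue p x.
Proof.
move=> hx [[s [/s321_2P [i [k [h1 h2 h3 h5 h6]]] e]] | [s [/s4312_2P [a [b [c [h1 h2 [h3 h4] h5 [h6 h7]]]]] e]]].
  rewrite sizeq in h3; rewrite !Qlt in h5 h6; try lia.
  left; exists (sh t s); split; last by apply: Qsh_eq => //; lia.
  apply/s321_2P; exists (sh t i), (sh t k).
  by split; rewrite ?sh_mono ?sh_lt //; lia.
rewrite sizeq in h4; rewrite !Qlt in h5 h6 h7; try lia.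
right; exists (sh t s); split; last by apply: Qsh_eq => //; lia.
apply/s4312_2P; exists (sh t a), (sh t b), (sh t c).
by split; rewrite ?sh_mono ?sh_lt //; split; rewrite ?sh_mono ?sh_lt //; lia.
Qed.

Lemma down_s321_2 i j k : i < j -> j < k -> k < n -> i != t -> j != t -> k != t ->
  P k < P j -> P j < P i -> serves_as q [:: 3; 2; 1] 2 (relabel y (P j)).
Proof.
move=> h1 h2 h3 hi hj hk h4 h5; exists (unsh t j); split; last by rewrite Qunsh //; lia.
apply/s321_2P; exists (unsh t i), (unsh t k).
split; rewrite ?unsh_mono ?sizeq ?unsh_lt ?Qunsh_lt //; lia.
Qed.

Lemma down_s4312_2 e f g s : e < f -> f < g -> g < s -> s < n ->
  e != t -> f != t -> g != t -> s != t ->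
  P g < P s -> P s < P f -> P f < P e -> serves_as q [:: 4; 3; 1; 2] 2 (relabel y (P s)).
Proof.
move=> h1 h2 h3 h4 he hf hg hs h5 h6 h7; exists (unsh t s); split; last by rewrite Qunsh //; lia.
apply/s4312_2P; exists (unsh t e), (unsh t f), (unsh t g).
split; rewrite ?unsh_mono ?sizeq ?unsh_lt ?Qunsh_lt //; try lia; split;
  rewrite ?unsh_mono ?sizeq ?unsh_lt ?Qunsh_lt //; lia.
Qed.

Lemma down_s321_1 i j k : i < j -> j < k -> k < n -> i != t -> j != t -> k != t ->
  P k < P j -> P j < P i -> serves_at q [:: 3; 2; 1] 1 (unsh t k).
Proof.
move=> h1 h2 h3 hi hj hk h4 h5.
apply/s321_1P; exists (unsh t i), (unsh t j).
split; rewrite ?unsh_mono ?sizeq ?unsh_lt ?Qunsh_lt //; lia.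
Qed.

Lemma perm_q : is_perm q.
Proof.
have hy := Prange Hperm Ht.
rewrite /is_perm sizeq; apply: uniq_perm; last first.
- move=> x; rewrite mem_iota /delete; apply/mapP/idP.
    case=> z; rewrite mem_filter pmem // => /andP[/eqP hz hz'] ->.
    rewrite /relabel; case: ifP; lia.
  move=> hx; case: (ltnP x y) => hxy.
    exists x; last by rewrite /relabel; case: ifP; lia.
    rewrite mem_filter pmem //; apply/andP; split; [apply/eqP|]; lia.
  exists x.+1; last by rewrite /relabel; case: ifP; lia.
  rewrite mem_filter pmem //; apply/andP; split; [apply/eqP|]; lia.
- exact: iota_uniq.
rewrite /delete map_inj_in_uniq ?filter_uniq ?(puniq Hperm) //.
move=> x z; rewrite !mem_filter => /andP[hx _] /andP[hz _]; exact: relabel_inj.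
Qed.

Lemma indec_q : indecomposable p ->
  (exists t', [/\ t - 1 <= t', t' < n, t' != t & P t' < y]) ->
  (exists c, c < t /\ y < P c) -> indecomposable q.
Proof.
move=> Hind [t' [ht1 ht2 ht3 ht4]] [c [hc1 hc2]].
have hy := Prange Hperm Ht.
split; first by rewrite sizeq; move/eqP: ht3; lia.
move=> k hk hpe; rewrite sizeq in hk.
have hq : forall m, m < k -> Q m <= k.
  move=> m hm; have : Q m \in iota 1 k.
    rewrite -(perm_mem hpe); have <- : nth 0 (take k q) m = Q m by rewrite nth_take.
    by apply: mem_nth; rewrite size_take sizeq; case: ifP => h0; lia.
  rewrite mem_iota; lia.
case: (ltnP k t) => hkt.
  have [m0 [hm0 hm0']] := indecP Hperm Hind (k := k) ltac:(lia).
  have := hq m0 hm0; rewrite Qe; last by lia.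
  rewrite /sh; have -> : m0 < t by lia.
  rewrite /relabel; case: ifP => hym0 hrel; last by lia.
  pose S := rem y (iota 1 k.+1).
  have hyS : y \in iota 1 k.+1 by rewrite mem_iota; lia.
  have Su : uniq (iota 1 k.+1) := iota_uniq _ _.
  have hS : forall v, (v \in S) = (v != y) && (1 <= v <= k.+1).
    by move=> v; rewrite /S (mem_rem_uniq _ Su) inE mem_iota; congr (_ && _); lia.
  have hsz : size S <= k by rewrite /S size_rem // size_iota.
  have hmS : forall m, m < k -> P m \in S.
    move=> m hm; rewrite hS; have := Prange Hperm (k := m) ltac:(lia).
    have hmt : m != t by apply/eqP; lia.
    have := Pne (ltac:(lia) : m < n) hmt; have := hq m hm; rewrite Qe; last by lia.
    rewrite /sh; have -> : m < t by lia.
    by rewrite /relabel => + /eqP hne; case: ifP => h0 h1 h2; apply/andP; split;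
      try apply/eqP; lia.
  have ht'S : P t' \in S.
    rewrite hS; have := Prange Hperm ht2; move=> h; apply/andP; split; [apply/eqP|]; lia.
  have [m [hm e]] := pigeon Hperm (k := k) ltac:(lia) hmS hsz ht'S.
  have := Pinj Hperm (ltac:(lia) : m < n) ht2 e; lia.
case: (leqP y k.+1) => hyk.
  have [m [hm hm']] := indecP Hperm Hind (k := k.+1) ltac:(lia).
  case: (eqVneq m t) => hmt; first by subst m; lia.
  have := hq (unsh t m); rewrite Qunsh //; last by lia.
  have : unsh t m < k by move: hmt; rewrite /unsh => /eqP ?; case: ifP; lia.
  by move=> h0 /(_ h0); rewrite /relabel; case: ifP; lia.
have hct : c != t by apply/eqP; lia.
have := hq (unsh t c); rewrite Qunsh //; last by lia.
have : unsh t c < k by rewrite /unsh; case: ifP; lia.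
by move=> h0 /(_ h0); rewrite /relabel; case: ifP; lia.
Qed.

Lemma fwd_blue x : x != y ->
  (exists t', [/\ (t' = t - 1 /\ 0 < t) \/ t' = t.+1, t' < n & P t' < y]) ->
  (forall u v w, u < v -> v < w -> w < n -> t.+2 <= w -> P w < P v -> P v < P u -> False) ->
  blue p x -> blue q (relabel y x).
Proof.
move=> hx [t' [ht1 ht2 ht3]] HL.
have ht't : t' != t by apply/eqP; case: ht1 => [[-> ?]|->]; lia.
case=> [[s [/s321_2P [e [k [h1 h2 h3 h4 h5]]] ex]] | [s [/s4312_2P [e [f [g [h1 h2 [h3 h3'] h4 [h5 h6]]]]] ex]]]; subst x.
  have hst : s != t by apply/eqP=> est; move: hx; rewrite est eqxx.
  left.
  case: (eqVneq e t) => het; first by subst e; exfalso; apply: (HL t s k) => //; lia.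
  case: (eqVneq k t) => hkt; last by apply: (down_s321_2 (i := e) (k := k)).
  subst k.
  have hst' : s < t'.
    case: ht1 => [[et ?]|et]; subst t'; last by lia.
    have : s != t - 1 by apply/eqP=> es; move: h4; rewrite es; lia.
    move/eqP; lia.
  by apply: (down_s321_2 (i := e) (k := t')) => //; lia.
have hst : s != t by apply/eqP=> est; move: hx; rewrite est eqxx.
right.
case: (eqVneq e t) => het; first by subst e; exfalso; apply: (HL t f g) => //; lia.
case: (eqVneq f t) => hft; first by subst f; exfalso; apply: (HL e t s) => //; lia.
case: (eqVneq g t) => hgt; last by apply: (down_s4312_2 (e := e) (f := f) (g := g)).
subst g.
have [hf' hs'] : f < t' /\ t' < s.
  case: ht1 => [[et ?]|et]; subst t'.
    have : f != t - 1 by apply/eqP=> es; move: h5; rewrite es; lia.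
    move/eqP; lia.
  have : s != t.+1 by apply/eqP=> es; move: h4; rewrite es; lia.
  move/eqP; lia.
by apply: (down_s4312_2 (e := e) (f := f) (g := t')) => //; lia.
Qed.
End Del.

From Stdlib Require Import Classical.

Lemma rightmost (R : nat -> Prop) N : (exists m, m < N /\ R m) ->
  exists m, [/\ m < N, R m & forall k, m < k < N -> ~ R k].
Proof.
move=> H; elim: N H => [|N IH] [m [hm hR]] //.
case: (classic (R N)) => hN.
  by exists N; split=> // k hk; lia.
have [m' [h1 h2 h3]] : exists m', [/\ m' < N, R m' & forall k, m' < k < N -> ~ R k].
  apply: IH; exists m; split=> //; case: (ltngtP m N) => //; [lia|by move=> e; subst m].
exists m'; split=> //; first lia.
move=> k hk; case: (ltngtP k N) => hkN; [apply: h3; lia|lia|by subst k].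
Qed.

Lemma leftmost (R : nat -> Prop) lo N : (exists m, lo < m < N /\ R m) ->
  exists m, [/\ lo < m < N, R m & forall k, lo < k < m -> ~ R k].
Proof.
move=> H; elim: N H => [|N IH] [m [hm hR]]; first lia.
case: (classic (exists m, lo < m < N /\ R m)) => hN.
  by have [m' [h1 h2 h3]] := IH hN; exists m'; split=> //; lia.
have emN : m = N.
  case: (ltngtP m N) => // h; [exfalso; apply: hN; exists m; split=> //; lia | lia].
subst m; exists N; split=> // k hk hRk; apply: hN; exists k; split=> //; lia.
Qed.

Lemma s321_1_contains p s : serves_at p [:: 3; 2; 1] 1 s -> contains p [:: 3; 2; 1].
Proof.
by case/s321_1P=> u [v [h1 h2 h3 h4 h5]]; apply/c321P; exists u, v, s.
Qed.

Section Main.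
Variable p : seq nat.
Variable i : nat.
Hypothesis Hperm : is_perm p.
Hypothesis Hind : indecomposable p.
Hypothesis H3241 : ~ contains p [:: 3; 2; 4; 1].
Hypothesis H4321 : ~ contains p [:: 4; 3; 2; 1].
Hypothesis Hlast : last_one_pos p i.
Local Notation P := (nth 0 p).
Local Notation n := (size p).

Lemma L0 : exists u v, [/\ u < v, v < i, i < n, P i < P v & P v < P u].
Proof. by case: Hlast => /s321_1P. Qed.

Lemma nolast u v j : u < v -> v < j -> j < n -> i < j -> P j < P v -> P v < P u -> False.
Proof.
move=> h1 h2 h3 h4 h5 h6; case: Hlast => _ /(_ j h4); apply; apply/s321_1P.
by exists u, v.
Qed.

Lemma no3241 a b c d : a < b -> b < c -> c < d -> d < n ->
  P d < P b -> P b < P a -> P a < P c -> False.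
Proof. by move=> *; apply: H3241; apply/c3241P; exists a, b, c, d. Qed.

Lemma no4321 a b c d : a < b -> b < c -> c < d -> d < n ->
  P d < P c -> P c < P b -> P b < P a -> False.
Proof. by move=> *; apply: H4321; apply/c4321P; exists a, b, c, d. Qed.

Lemma hi2 : 2 <= i /\ i < n.
Proof. have [u [v [h1 h2 h3 _ _]]] := L0; lia. Qed.

Lemma Pneq : P (i - 1) != P i.
Proof.
have [h1 h2] := hi2; apply/eqP=> e; have := Pinj Hperm (ltac:(lia) : i - 1 < n) h2 e; lia.
Qed.

Lemma cpos : P i < P (i - 1) -> exists c, c < i - 1 /\ P (i - 1) < P c.
Proof.
move=> hab; have [u [v [h1 h2 h3 h4 h5]]] := L0.
case: (eqVneq v (i - 1)) => hv.
  by exists u; subst v; split=> //; lia.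
have hv' : v < i - 1 by move/eqP: hv; lia.
exists u; split; first lia.
have hu : u < n by lia.
have hne : P u != P (i - 1).
  apply/eqP=> e; have := Pinj Hperm hu (ltac:(lia) : i - 1 < n) e; lia.
case: (ltngtP (P u) (P (i - 1))) => // h; last by move/eqP: hne.
exfalso; case: (ltngtP (P v) (P (i - 1))) => h'.
- by apply: (no3241 (a := u) (b := v) (c := i - 1) (d := i)); lia.
- by apply: (no4321 (a := u) (b := v) (c := i - 1) (d := i)); lia.
- by have := Pinj Hperm (ltac:(lia) : v < n) (ltac:(lia) : i - 1 < n) h'; lia.
Qed.

Lemma avoid_q t : t < n ->
  (exists t', [/\ t - 1 <= t', t' < n, t' != t & P t' < P t]) ->
  (exists c, c < t /\ P t < P c) -> avoider (delete p (nth 0 p t)).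
Proof.
move=> Ht h1 h2; split.
- exact: perm_q.
- exact: indec_q.
- by move/(up_c3241 Hperm Ht).
- by move/(up_c4321 Hperm Ht).
Qed.

Lemma blue_q t : t < n ->
  (exists t', [/\ (t' = t - 1 /\ 0 < t) \/ t' = t.+1, t' < n & P t' < P t]) ->
  i <= t.+1 ->
  forall x, x \in p -> x != P t ->
    (blue p x <-> blue (delete p (nth 0 p t)) (relabel (P t) x)).
Proof.
move=> Ht h1 hit x _ hx; split; last exact: up_blue.
apply: fwd_blue => // u v w h2 h3 h4 h5 h6 h7.
by apply: (nolast (u := u) (v := v) (j := w)) => //; lia.
Qed.

Lemma peak_case2 : P (i - 1) < P i ->
  in_peak_insertion_set (delete p (nth 0 p i)) (nth 0 p i).
Proof.
move=> hba; have [hi hin] := hi2; have [u [v [h1 h2 h3 h4 h5]]] := L0.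
have hv : v < i - 1.
  have : v != i - 1 by apply/eqP=> e; subst v; lia.
  move/eqP; lia.
have hs1 : serves_at (delete p (nth 0 p i)) [:: 3; 2; 1] 1 (i - 1).
  have := down_s321_1 Hperm hin (i := u) (j := v) (k := i - 1).
  have -> : unsh i (i - 1) = i - 1 by rewrite /unsh; case: ifP; lia.
  apply; try lia; apply/eqP; lia.
left; split; first exact: s321_1_contains hs1.
have hex : exists m, m < i - 1 /\ P (i - 1) < P m by exists v; split=> //; lia.
have [jj [hj1 hj2 hj3]] := rightmost hex.
have hqn : i - 1 < n - 1 by lia.
have eQ : forall k, k < i -> nth 0 (delete p (nth 0 p i)) k = relabel (P i) (P k).
  by move=> k hk; rewrite Qe //; [rewrite /sh; have -> : k < i by [] | lia].
exists (i - 1), jj; split; [|split].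
- split=> // j hj /(up_s321_1 Hperm hin).
  rewrite /sh; have -> : (j < i) = false by apply/negbTE; rewrite -leqNgt; lia.
  case: Hlast => _ /(_ j.+1); apply; lia.
- split=> //; split.
    rewrite !eQ; try lia; rewrite relabel_lt //; apply: Pne => //; apply/eqP; lia.
  move=> k hk; rewrite !eQ; try lia; rewrite relabel_lt; try (apply: Pne => //; apply/eqP; lia).
  by apply: hj3.
left.
have hvj : v <= jj.
  case: (leqP v jj) => // hh; exfalso; apply: (hj3 v); lia.
have hjne : P jj != P i.
  by apply: Pne => //; [lia | apply/eqP; lia].
have hajj : P i < P jj.
  case: (ltngtP (P i) (P jj)) => // hh; last by move/eqP: hjne; rewrite hh.
  exfalso; have hvj' : v < jj.
    have : v != jj by apply/eqP=> e; subst v; lia.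
    move/eqP; lia.
  by apply: (no4321 (a := u) (b := v) (c := jj) (d := i - 1)); lia.
rewrite !eQ; try lia.
by rewrite /relabel; case: ifP; case: ifP; lia.
Qed.

Lemma peak_case1 : P i < P (i - 1) ->
  in_peak_insertion_set (delete p (nth 0 p (i - 1))) (nth 0 p (i - 1)).
Proof.
move=> hab; have [hi hin] := hi2; have [c [hc1 hc2]] := cpos hab.
have Ht : i - 1 < n by lia.
have hsz := sizeq Hperm Ht.
have hPne : forall k, k < n -> k != i - 1 -> P k != P (i - 1) by move=> k hk hk'; apply: Pne.
have eQ : forall k, k < i - 1 ->
    nth 0 (delete p (nth 0 p (i - 1))) k = relabel (P (i - 1)) (P k).
  by move=> k hk; rewrite Qe //; [rewrite /sh; have -> : k < i - 1 by [] | lia].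
have eQa : nth 0 (delete p (nth 0 p (i - 1))) (i - 1) = P i.
  rewrite Qe //; last by lia.
  rewrite /sh; have -> : (i - 1 < i - 1) = false by rewrite ltnn.
  have -> : (i - 1).+1 = i by lia.
  by rewrite /relabel; case: ifP; lia.
have hcr := Prange Hperm (ltac:(lia) : c < n).
have hir := Prange Hperm hin.
case: (classic (contains (delete p (nth 0 p (i - 1))) [:: 3; 2; 1])) => hq; last first.
  by right; split=> //; rewrite hsz; lia.
left; split=> //.
have hex : exists m, m < size (delete p (nth 0 p (i - 1))) /\
    serves_at (delete p (nth 0 p (i - 1))) [:: 3; 2; 1] 1 m.
  case/c321P: hq => i0 [j0 [k0 [h1 h2 h3 h4 h5]]]; exists k0; split=> //.
  by apply/s321_1P; exists i0, j0.
have [i2 [h1 h2 h3]] := rightmost hex.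
have hl : last_one_pos (delete p (nth 0 p (i - 1))) i2.
  split=> // j hj hsj; have := hsj; case/s321_1P => ? [? [_ _ hjs _ _]].
  exact: (h3 j ltac:(lia) hsj).
rewrite hsz in h1.
have hi2le : i2 <= i - 1.
  case: (leqP i2 (i - 1)) => // hh; exfalso.
  move: (up_s321_1 Hperm Ht h2); rewrite /sh.
  have -> : (i2 < i - 1) = false by apply/negbTE; rewrite -leqNgt; lia.
  by case: Hlast => _ /(_ i2.+1); apply; lia.
have := h2; case/s321_1P => u2 [v2 [hu1 hu2 hu3 hu4 hu5]].
have hex2 : exists m, m < i2 /\
    nth 0 (delete p (nth 0 p (i - 1))) i2 < nth 0 (delete p (nth 0 p (i - 1))) m.
  by exists v2; split.
have [jj [hj1 hj2 hj3]] := rightmost hex2.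
exists i2, jj; split; [done|split; [by split|]].
case: (ltngtP i2 (i - 1)) => hi2c; last first.
- (* i2 = i - 1 *)
  subst i2; left; rewrite eQa; rewrite eQa eQ // in hj2.
  rewrite eQ //.
  have hjne := hPne jj ltac:(lia) ltac:(apply/eqP; lia).
  have hajj : P i < P jj by move: hj2; rewrite /relabel; case: ifP; lia.
  case: (ltngtP (P jj) (P (i - 1))) => hh; last by move/eqP: hjne.
    apply/andP; split; first lia.
    rewrite /relabel; case: ifP => hh'; first lia.
    case: (leqP (P (i - 1)) (P jj).+1) => // hw; exfalso.
    have [m [hm hme]] := Ppos Hperm (v := (P jj).+1) ltac:(have := Prange Hperm hin; lia).
    case: (ltngtP m jj) => hmj; last by subst m; lia.
      by apply: (no3241 (a := m) (b := jj) (c := i - 1) (d := i)); lia.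
    case: (ltngtP m (i - 1)) => hmi.
      apply: (hj3 m); first lia.
      rewrite eQa eQ // /relabel; case: ifP; lia.
    case: (ltngtP m i) => hmi'.
      lia.
      by apply: (nolast (u := c) (v := i - 1) (j := m)); lia.
      by subst m; lia.
    by subst m; lia.
  apply/andP; split; first lia.
  rewrite /relabel; case: ifP; lia.
- by exfalso; lia.
(* i2 < i - 1 *)
right.
have hnl : ~ is_LRMax (delete p (nth 0 p (i - 1))) (i - 1).
  move/(_ c hc1); rewrite eQa eQ // /relabel; case: ifP; lia.
have hex3 : exists m, i2 < m < i /\ ~ is_LRMax (delete p (nth 0 p (i - 1))) m.
  by exists (i - 1); split=> //; lia.
have [k [hk1 hk2 hk3]] := leftmost hex3.
exists k; split.
  split; first by rewrite hsz; lia.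
  split=> // m hm; apply: NNPP; exact: hk3.
rewrite hsz; apply/andP; split; last lia.
case: (ltngtP k (i - 1)) => hki; last by subst k; rewrite eQa.
- rewrite eQ //.
  have hkne := hPne k ltac:(lia) ltac:(apply/eqP; lia).
  case: (ltngtP (P k) (P (i - 1))) => hh; last by move/eqP: hkne.
    by rewrite /relabel; case: ifP; lia.
  exfalso; apply: hk2 => j hj.
  case: (ltnP (nth 0 (delete p (nth 0 p (i - 1))) j) (nth 0 (delete p (nth 0 p (i - 1))) k)) => // hh2.
  exfalso; move: hh2; rewrite !eQ; try lia.
  rewrite leqNgt relabel_lt; try (apply: hPne; [lia | apply/eqP; lia]).
  rewrite -leqNgt => hh2.
  have hjk : P j != P k.
    apply/eqP=> e; have := Pinj Hperm (ltac:(lia) : j < n) (ltac:(lia) : k < n) e; lia.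
  have hh3 : P k < P j by move/eqP: hjk; lia.
  by apply: (no4321 (a := j) (b := k) (c := i - 1) (d := i)); lia.
- lia.
Qed.

End Main.

Theorem proposition6 (p : seq nat) (y : nat) :
  avoider p -> contains p [:: 3; 2; 1] -> peak_blue p y ->
  [/\ avoider (delete p y),
      (forall x, x \in p -> x != y ->
         (blue p x <-> blue (delete p y) (relabel y x)))
    & in_peak_insertion_set (delete p y) y].
Proof.
move=> [Hperm Hind H3241 H4321] _ [i [Hlast ey]].
rewrite -subn1 in ey.
have [hi hin] := hi2 Hlast.
have hne := Pneq Hperm Hlast.
have [u [v [h1 h2 h3 h4 h5]]] := L0 Hlast.
case: (ltngtP (nth 0 p (i - 1)) (nth 0 p i)) => hh; last by move/eqP: hne.
- have -> : y = nth 0 p i by rewrite ey; lia.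
  split.
  + apply: avoid_q => //.
      by exists (i - 1); split=> //; [lia | apply/eqP; lia].
    by exists u; split=> //; lia.
  + apply: (blue_q (i := i)) => //; try lia.
    by exists (i - 1); split=> //; [left; split=> //; lia | lia].
  + exact: peak_case2.
- have -> : y = nth 0 p (i - 1) by rewrite ey; lia.
  have Ht : i - 1 < size p by lia.
  split.
  + apply: avoid_q => //.
      by exists i; split=> //; [lia | apply/eqP; lia].
    exact: cpos.
  + apply: (blue_q (i := i)) => //; try lia.
    by exists i; split=> //; right; lia.
  + exact: peak_case1.
Qed.
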